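(* Let $A\in\mathbb{R}_+^{n\times n}$ and let $x\in\mathbb{R}_+^n$ be a Perron eigenvector of $A$. Then: (1) if for all $1\le i,j,k\le n$, $x_k<x_j$ implies $a_{i,k}\le a_{i,j}$, then $\rho(A)=\max_{B\in\Omega(A)}\rho(B)$; (2) if for all $1\le i,j,k\le n$, $x_k<x_j$ implies $a_{i,k}\ge a_{i,j}$, then $\rho(A)=\min_{B\in\Omega(A)}\rho(B)$.
   Context: For $A=(a_{i,j})\in\mathbb{R}_+^{n\times n}$ (nonnegative $n\times n$ matrices), $\Omega(A)=\{B\in\mathbb{R}_+^{n\times n}:\ \forall i\ \exists\text{ a permutation }\phi_i\text{ of }\{1,\dots,n\}\text{ with } b_{i,j}=a_{i,\phi_i(j)}\ \forall j\}$. $\rho(B)$ denotes the spectral radius (Perron root) of $B$. A Perron eigenvector of $A$ is a nonzero nonnegative vector $x$ with $Ax=\rho(A)x$. *)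

(* Defs.v *)
From HB Require Import structures.
From mathcomp Require Import all_boot all_order all_algebra all_fingroup.
From mathcomp Require Import reals.
From mathcomp.real_closed Require Import complex.
Set Implicit Arguments. Unset Strict Implicit. Unset Printing Implicit Defensive.
Import Order.TTheory GRing.Theory Num.Theory.
Local Open Scope ring_scope.

Section Spectral.
Variable R : realType.
Variable n : nat.

Definition nonneg_mx (A : 'M[R]_n) : Prop := forall i j, 0 <= A i j.

Definition complexify (A : 'M[R]_n) : 'M[R[i]]_n := map_mx (fun x => x%:C%C) A.

(* the (complex) eigenvalues of A with multiplicity: a sequence r with
   char_poly A = \prod_(z <- r) ('X - z) over the algebraically closed R[i] *)
Definition eigenvalues (A : 'M[R]_n) : seq R[i] :=
  sval (closed_field_poly_normal (char_poly (complexify A))).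

Definition spectral_radius (A : 'M[R]_n) : R :=
  \big[Num.max/0]_(z <- eigenvalues A) ComplexField.Normc.normc z.

Definition perron_eigenvector (A : 'M[R]_n) (x : 'cV[R]_n) : Prop :=
  x != 0 /\ (forall i, 0 <= x i 0) /\ A *m x = spectral_radius A *: x.

Definition in_Omega (A B : 'M[R]_n) : Prop :=
  nonneg_mx B /\ forall i : 'I_n, exists phi : 'S_n, forall j, B i j = A i (phi j).

End Spectral.

(* Main.v *)
Require Import Defs.
From HB Require Import structures.
From mathcomp Require Import all_boot all_order all_algebra all_fingroup.
From mathcomp Require Import reals ring lra.
From mathcomp.real_closed Require Import complex.
Import Order.TTheory GRing.Theory Num.Theory.
Local Open Scope ring_scope.
Section Rearr.
Variable R : realType.

Lemma exists_max (I : finType) (P : pred I) (F : I -> R) i0 : P i0 ->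
  exists j, P j /\ forall y, P y -> F y <= F j.
Proof.
move=> Pi0; case: (Order.TotalTheory.arg_maxP F Pi0) => j Pj H.
by exists j; split.
Qed.

Variable n : nat.

Lemma swap_sum (a x : 'I_n -> R) (s : 'S_n) j c : c != j ->
  \sum_y a ((tperm j c * s)%g y) * x y =
  \sum_y a (s y) * x y + (a (s c) - a (s j)) * (x j - x c).
Proof.
move=> cj.
have split2 (F : 'I_n -> R) : \sum_y F y = F j + F c + \sum_(y | (y != j) && (y != c)) F y.
  rewrite (bigD1 j) //= (bigD1 c) /=; last by rewrite cj.
  by rewrite addrA.
rewrite split2 [X in _ = X + _]split2.
rewrite !permM tpermL tpermR.
rewrite (eq_bigr (fun y => a (s y) * x y)); last first.
  move=> y /andP [yj yc]; rewrite permM tpermD //; by rewrite eq_sym.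
ring.
Qed.

Lemma card_swap (s : 'S_n) j c f : s j != j -> s c != c -> (f == j) || (f == c) ->
  (tperm j c * s)%g f = f ->
  (#|[pred y | (tperm j c * s)%g y != y]| < #|[pred y | s y != y]|)%N.
Proof.
move=> nj nc hf ff.
have nf : s f != f by case/orP: hf => /eqP ->.
rewrite (cardD1 f [pred y | s y != y]) inE nf add1n ltnS.
apply: subset_leq_card; apply/subsetP => y; rewrite !inE => ny.
apply/andP; split.
  by apply: contraNneq ny => ->; rewrite ff.
have [->|yj] := eqVneq y j => //.
have [->|yc] := eqVneq y c => //.
by move: ny; rewrite permM tpermD // eq_sym.
Qed.

Lemma rearr (a x : 'I_n -> R) (s : 'S_n) :
  (forall j k, x k < x j -> a k <= a j) ->
  \sum_j a (s j) * x j <= \sum_j a j * x j.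
Proof.
move=> ord.
suff H : forall m (s : 'S_n), (#|[pred y | s y != y]| <= m)%N ->
  \sum_j a (s j) * x j <= \sum_j a j * x j by exact: (H _ s (leqnn _)).
elim=> [|m IH] {}s hs.
  have fx y : s y = y.
    apply/eqP/negPn/negP => ny; move: hs; rewrite leqn0 => /eqP/card0_eq/(_ y).
    by rewrite !inE ny.
  by rewrite (eq_bigr (fun j => a j * x j)) // => j _; rewrite fx.
case: (pickP [pred y | s y != y]) => [y0 ny0 | none]; last first.
  rewrite (eq_bigr (fun j => a j * x j)) // => j _.
  by move: (none j) => /= /negbFE/eqP ->.
have [j [nj jmax]] := @exists_max _ _ x _ ny0.
move: nj; rewrite /= => nj.
set k := (s^-1)%g j.
have sk : s k = j by rewrite /k permKV.
have kj : k != j by apply: contraNneq nj => e; rewrite -{1}e sk.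
have nk : s k != k by rewrite sk eq_sym.
set p := s j.
have np : s p != p.
  apply: contraNneq nj => e.
  by apply/eqP; apply: (@perm_inj _ s); exact: e.
have hxk : x k <= x j by apply: jmax; rewrite /= nk.
have hxp : x p <= x j by apply: jmax; rewrite /= np.
have [ltp | gep] := ltP (x p) (x j).
  have fj : (tperm j k * s)%g j = j by rewrite permM tpermL sk.
  have hc := @card_swap s j k j nj nk (introT orP (or_introl (eqxx j))) fj.
  apply: le_trans (IH (tperm j k * s)%g _); last by rewrite -ltnS (leq_trans hc).
  rewrite swap_sum // sk -/p lerDl.
  apply: mulr_ge0; first by rewrite subr_ge0 ord.
  by rewrite subr_ge0.
have exj : x p = x j by apply: le_anti; rewrite hxp gep.
have pj : p != j by exact: nj.
have fp : (tperm j p * s)%g p = p by rewrite permM tpermR.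
have hc := @card_swap s j p p nj np (introT orP (or_intror (eqxx p))) fp.
apply: le_trans (IH (tperm j p * s)%g _); last by rewrite -ltnS (leq_trans hc).
by rewrite swap_sum // exj subrr mulr0 addr0.
Qed.
End Rearr.
Section Helpers.
Variable R : realType.
Local Notation nc := (@ComplexField.Normc.normc R).

Lemma ncE (z : R[i]) : `|z| = (nc z)%:C%C.
Proof. rewrite normc_def; case: z => a b; done. Qed.

Lemma nc_ge0 z : 0 <= nc z.
Proof. by rewrite -ler0c -ncE normr_ge0. Qed.

Lemma ncD z w : nc (z + w) <= nc z + nc w.
Proof. by rewrite -(lecR (nc (z+w))) rmorphD /= -!ncE ler_normD. Qed.

Lemma ncM z w : nc (z * w) = nc z * nc w.
Proof. by apply: complexI; rewrite rmorphM /= -!ncE normrM. Qed.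

Lemma ncR (a : R) : nc (a%:C%C) = `|a|.
Proof. apply: complexI; rewrite -ncE. rewrite !normc_def /=. by rewrite expr0n /= addr0 sqrtr_sqr. Qed.

Lemma nc0 : nc 0 = 0.
Proof. by rewrite (ncR 0) normr0. Qed.

Lemma nc_eq0 z : (nc z == 0) = (z == 0).
Proof. by rewrite -(inj_eq (@complexI R)) -ncE /= normr_eq0. Qed.

Lemma nc_sum (I : Type) (r : seq I) (F : I -> R[i]) :
  nc (\sum_(i <- r) F i) <= \sum_(i <- r) nc (F i).
Proof.
elim: r => [|a r IH]; first by rewrite !big_nil nc0.
rewrite !big_cons; apply: le_trans (ncD _ _) _; exact: lerD.
Qed.

Variable n : nat.

Lemma eig_root (C : 'M[R]_n) z :
  (z \in eigenvalues C) = root (char_poly (complexify C)) z.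
Proof.
rewrite /eigenvalues; case: closed_field_poly_normal => r /= ->.
by rewrite (monicP (char_poly_monic _)) scale1r root_prod_XsubC.
Qed.

Lemma rho_ge0 (C : 'M[R]_n) : 0 <= spectral_radius C.
Proof.
rewrite /spectral_radius; elim: (eigenvalues C) => [|a r IH].
  by rewrite big_nil.
by rewrite big_cons le_max IH orbT.
Qed.

Lemma nc_le_rho (C : 'M[R]_n) z : z \in eigenvalues C -> nc z <= spectral_radius C.
Proof. move=> zin; rewrite /spectral_radius. exact: (le_bigmax_seq _ _ xpredT). Qed.

Lemma rho_le (C : 'M[R]_n) l : 0 <= l ->
  (forall z, root (char_poly (complexify C)) z -> nc z <= l) -> spectral_radius C <= l.
Proof.
move=> l0 H; rewrite /spectral_radius big_seq_cond; apply: bigmax_le => // z.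
by rewrite andbT => zin; apply: H; rewrite -eig_root.
Qed.

Lemma eigvecP (C : 'M[R]_n) z : root (char_poly (complexify C)) z ->
  exists2 v : 'rV[R[i]]_n, (forall j, z * v 0 j = \sum_i v 0 i * (C i j)%:C%C) & v != 0.
Proof.
rewrite -eigenvalue_root_char => /eigenvalueP [v vC vn0]; exists v => // j.
by have := congr1 (fun M : 'M[R[i]]_(1,n) => M 0 j) vC; rewrite !mxE => <-; apply: eq_bigr => i _; rewrite mxE.
Qed.

Lemma rho_upper (C : 'M[R]_n) (x : 'cV[R]_n) l : nonneg_mx C -> (forall i, 0 <= x i 0) ->
  0 <= l -> (forall i, (C *m x) i 0 <= l * x i 0) ->
  (forall i j, x i 0 = 0 -> C i j = 0) -> spectral_radius C <= l.
Proof.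
move=> C0 x0 l0 Cx zr; apply: rho_le => // z /eigvecP [v ent vn0].
pose w i := nc (v 0 i).
pose s := \sum_i w i * x i 0.
have w0 i : 0 <= w i by exact: nc_ge0.
have s0 : 0 <= s by apply: sumr_ge0 => i _; apply: mulr_ge0.
have key : nc z * s <= l * s.
  have e1 : nc z * s = \sum_j nc (z * v 0 j) * x j 0.
    by rewrite /s mulr_sumr; apply: eq_bigr => j _; rewrite ncM mulrA.
  have e2 : \sum_j (\sum_i w i * C i j) * x j 0 = \sum_i w i * (C *m x) i 0.
    rewrite (eq_bigr (fun j => \sum_i w i * C i j * x j 0)); last first.
      by move=> j _; rewrite mulr_suml.
    rewrite exchange_big; apply: eq_bigr => i _; rewrite mxE mulr_sumr.
    by apply: eq_bigr => j _; rewrite mulrA.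
  rewrite e1; apply: (le_trans (y := \sum_j (\sum_i w i * C i j) * x j 0)).
    apply: ler_sum => j _; apply: ler_wpM2r => //; rewrite ent.
    apply: le_trans (nc_sum _ _ _) _; apply: ler_sum => i _.
    by rewrite ncM ncR ger0_norm.
  rewrite e2 /s mulr_sumr; apply: ler_sum => i _.
  by rewrite mulrCA; apply: ler_wpM2l.
have [spos|] := ltP 0 s; first by rewrite -(ler_pM2r spos).
move=> sle; have s00 : s = 0 by apply: le_anti; rewrite sle s0.
move/eqP: s00; rewrite psumr_eq0 => [/allP hall|i _]; last by apply: mulr_ge0.
have [j vj] : exists j, v 0 j != 0.
  apply/existsP; apply: contraNT vn0; rewrite negb_exists => /forallP h.
  by apply/eqP/rowP => j; rewrite mxE; apply/eqP; move: (h j); rewrite negbK.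
have zv : z * v 0 j = 0.
  rewrite ent big1 // => i _.
  have [xi0|xi0] := eqVneq (x i 0) 0; first by rewrite zr // mulr0.
  have := hall i (mem_index_enum _); rewrite mulf_eq0 (negbTE xi0) orbF.
  by rewrite /w nc_eq0 => /eqP ->; rewrite mul0r.
move/eqP: zv; rewrite mulf_eq0 (negbTE vj) orbF => /eqP ->.
by rewrite nc0.
Qed.

Definition N1 (v : 'cV[R[i]]_n) := \sum_i nc (v i 0).
Definition Kmx (M : 'M[R[i]]_n) := \sum_j \sum_i nc (M i j).

Lemma N1_ge0 (v : 'cV[R[i]]_n) : 0 <= N1 v.
Proof. by apply: sumr_ge0 => i _; exact: nc_ge0. Qed.

Lemma nc_le_N1 (v : 'cV[R[i]]_n) k : nc (v k 0) <= N1 v.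
Proof.
rewrite /N1 (bigD1 k) //= lerDl; apply: sumr_ge0 => j _; exact: nc_ge0.
Qed.

Lemma col_le_K (M : 'M[R[i]]_n) j : \sum_i nc (M i j) <= Kmx M.
Proof.
rewrite /Kmx [X in _ <= X](bigD1 j) //= lerDl; apply: sumr_ge0 => k _.
apply: sumr_ge0 => i _; exact: nc_ge0.
Qed.

Lemma N1_mul (M : 'M[R[i]]_n) (v : 'cV[R[i]]_n) q : (forall j, \sum_i nc (M i j) <= q) ->
  N1 (M *m v) <= q * N1 v.
Proof.
move=> hq; rewrite /N1.
apply: (le_trans (y := \sum_i \sum_j nc (M i j) * nc (v j 0))).
  apply: ler_sum => i _; rewrite mxE; apply: le_trans (nc_sum _ _ _) _.
  by apply: ler_sum => j _; rewrite ncM.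
rewrite exchange_big mulr_sumr; apply: ler_sum => j _.
rewrite -mulr_suml; apply: ler_wpM2r; [exact: nc_ge0 | exact: hq].
Qed.

Lemma nc_mul_le (M : 'M[R[i]]_n) (v : 'cV[R[i]]_n) k : nc ((M *m v) k 0) <= Kmx M * N1 v.
Proof.
apply: le_trans (nc_le_N1 _ k) _; apply: N1_mul => j; exact: col_le_K.
Qed.


Lemma bernoulli (p : R) k : 1 <= p -> 1 + k%:R * (p - 1) <= p ^+ k.
Proof.
move=> p1; elim: k => [|k IH]; first by rewrite mul0r addr0 expr0.
rewrite exprS; apply: le_trans (ler_wpM2l _ IH); last by lra.
have k0 : 0 <= (k%:R : R) by apply: ler0n.
have h : 0 <= k%:R * ((p - 1) * (p - 1)) by apply: mulr_ge0 => //; apply: mulr_ge0; lra.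
rewrite -natr1; nra.
Qed.

Lemma rho_lower (C : 'M[R]_n) (x : 'cV[R]_n) l : nonneg_mx C -> (forall i, 0 <= x i 0) ->
  x != 0 -> (forall i, l * x i 0 <= (C *m x) i 0) -> l <= spectral_radius C.
Proof.
move=> C0 x0 xn0 Cx.
set r := spectral_radius C.
have r0 : 0 <= r := rho_ge0 C.
case: (leP l r) => // hrl.
have l0 : 0 < l := le_lt_trans r0 hrl.
have [i0 xi0] : exists i0, 0 < x i0 0.
  apply/existsP; apply: contraNT xn0; rewrite negb_exists => /forallP h.
  apply/eqP/colP => i; rewrite mxE; apply: le_anti; rewrite x0 andbT.
  by move: (h i); rewrite -leNgt.
have n0 : (0 < n)%N by exact: (leq_ltn_trans (leq0n _) (ltn_ord i0)).
pose u k := iter k (mulmx C) x.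
have uS k : u k.+1 = C *m u k by [].
have ub k i : l ^+ k * x i 0 <= u k i 0.
  elim: k i => [|k IH] i; first by rewrite expr0 mul1r.
  apply: (le_trans (y := l ^+ k * (C *m x) i 0)).
    rewrite exprS -mulrA mulrCA; apply: ler_wpM2l; last exact: Cx.
    by apply: exprn_ge0; exact: ltW.
  rewrite uS !mxE mulr_sumr; apply: ler_sum => j _.
  by rewrite mulrCA; apply: ler_wpM2l; [exact: C0 | exact: IH].
pose cx (v : 'cV[R]_n) : 'cV[R[i]]_n := map_mx (fun a => a%:C%C) v.
set Cc := complexify C.
have ucS k : cx (u k.+1) = Cc *m cx (u k).
  apply/colP => i; rewrite uS !mxE rmorph_sum; apply: eq_bigr => j _.
  by rewrite !mxE rmorphM.
have [P Pun Ptrig] := Schur Cc n0.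
set T := conjmx P Cc in Ptrig.
have Pu := unitarymx_unit Pun.
have PT : P *m Cc = T *m P := similarPp (stablemx_unit _ Pu) (eqxx _).
move/is_trig_mxP: Ptrig => Ttrig.
have Tdiag j : nc (T j j) <= r.
  apply: nc_le_rho; rewrite eig_root -eigenvalue_root_char.
  have : eigenvalue T (T j j).
    rewrite eigenvalue_root_char char_poly_trig; last by apply/is_trig_mxP.
    rewrite rootE horner_prod (bigD1 j) //= !hornerE subrr mul0r //.
  move/eigenvalueP => [v vT vn0]; apply/eigenvalueP; exists (v *m P).
    by rewrite -mulmxA PT mulmxA vT scalemxAl.
  apply: contra vn0 => /eqP vP0.
  by apply/eqP; rewrite -(mulmxK Pu v) vP0 mul0mx.
have TT : forall i j : 'I_n, (i < j)%N -> T i j = 0 := Ttrig.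
clear Ttrig; clearbody T.
pose q := (r + l) / 2.
have hq1 : r < q by rewrite /q; lra.
have hq2 : q < l by rewrite /q; lra.
have q0 : 0 < q by lra.
set M := Kmx T.
have M0 : 0 <= M by apply: sumr_ge0 => j _; apply: sumr_ge0 => i _; exact: nc_ge0.
pose d := Num.min 1 ((q - r) / (M + 1)).
have dpos : 0 < d by rewrite /d lt_min ltr01 /= divr_gt0 //; lra.
have dle1 : d <= 1 by rewrite /d ge_min lexx.
have dM : d * M <= q - r.
  have h1 : d <= (q - r) / (M + 1) by rewrite /d ge_min lexx orbT.
  have M1 : 0 <= M + 1 by lra.
  have h2 := ler_wpM2r M1 h1.
  rewrite divfK in h2; last by apply: lt0r_neq0; lra.
  rewrite mulrDr mulr1 in h2.
  lra.
pose dc : R[i] := d%:C%C.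
have dc0 : dc != 0 by rewrite /dc (inj_eq (@complexI R)); apply: lt0r_neq0.
pose E := diag_mx (\row_(k < n) dc ^+ k).
pose E' := diag_mx (\row_(k < n) dc ^- k).
have hEE : E' *m E = 1%:M.
  apply/matrixP => i j; rewrite mul_diag_mx !mxE.
  have [->|ij] := eqVneq i j; first by rewrite !mulr1n mulVf // expf_neq0.
  by rewrite !mulr0n mulr0.
pose T' := E *m T *m E'.
pose S' := E *m P.
have hS : S' *m Cc = T' *m S'.
  have e1 : T' *m S' = E *m T *m P.
    by rewrite /T' /S' (mulmxA (E *m T *m E') E P) -(mulmxA (E *m T) E' E) hEE mulmx1.
  by rewrite e1 /S' -(mulmxA E P Cc) PT mulmxA.
pose W := invmx P *m E'.
have hW : W *m S' = 1%:M.
  by rewrite /W /S' mulmxA -(mulmxA (invmx P) E' E) hEE mulmx1 mulVmx.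
have d0 : 0 <= d by exact: ltW.
have ncdX k : nc (dc ^+ k) = d ^+ k.
  by rewrite /dc -rmorphXn ncR ger0_norm // exprn_ge0.
have ncdV k : nc (dc ^- k) = (d ^+ k)^-1.
  by rewrite /dc -rmorphXn -fmorphV ncR ger0_norm // invr_ge0 exprn_ge0.
have hent i j : nc (T' i j) <= (i == j)%:R * r + d * nc (T i j).
  rewrite /T' /E /E' mul_mx_diag mul_diag_mx !mxE !ncM ncdX ncdV.
  have hT0 : 0 <= nc (T i j) by exact: nc_ge0.
  have [ij|ji|ij] := ltngtP i j.
  - rewrite TT // nc0 mulr0 mul0r mulr0 addr0.
    by rewrite (_ : (i == j) = false) ?mul0r //; apply/negbTE; rewrite neq_ltn ij.
  - rewrite (_ : (i == j) = false) ?mul0r ?add0r; last first.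
      by apply/negbTE; rewrite neq_ltn ji orbT.
    rewrite mulrAC -expfB //.
    apply: ler_wpM2r => //.
    have -> : (i - j = (i - j).-1.+1)%N by rewrite prednK // subn_gt0.
    rewrite exprS; apply: (le_trans (y := d * 1)); last by rewrite mulr1.
    apply: ler_wpM2l => //; exact: exprn_ile1 d0 dle1.
  - have eij : i = j by apply: val_inj.
    rewrite eij eqxx mul1r mulrAC divff ?mul1r; last by rewrite expf_neq0 // lt0r_neq0.
    apply: le_trans (Tdiag j) _; rewrite lerDl; exact: mulr_ge0 d0 (nc_ge0 _).
have hcol j : \sum_i nc (T' i j) <= q.
  apply: le_trans (ler_sum _ (fun i _ => hent i j)) _.
  rewrite big_split /= -mulr_sumr.
  rewrite (bigD1 j) //= eqxx mul1r big1 ?addr0; last first.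
    by move=> i /negbTE ->; rewrite mul0r.
  have : \sum_i nc (T i j) <= M by exact: col_le_K.
  move=> hM; have := ler_wpM2l d0 hM; lra.
pose y k := S' *m cx (u k).
have hy k : N1 (y k) <= q ^+ k * N1 (y 0%N).
  elim: k => [|k IH]; first by rewrite expr0 mul1r.
  have -> : y k.+1 = T' *m y k by rewrite /y ucS mulmxA hS -mulmxA.
  apply: le_trans (@N1_mul T' (y k) q hcol) _.
  by rewrite exprS -mulrA; apply: ler_wpM2l => //; exact: ltW.
have hb k : l ^+ k * x i0 0 <= Kmx W * N1 (y 0%N) * q ^+ k.
  have uge : 0 <= u k i0 0.
    apply: le_trans (ub k i0); apply: mulr_ge0; [apply: exprn_ge0; exact: ltW | exact: x0].
  apply: le_trans (ub k i0) _.
  have -> : u k i0 0 = nc (cx (u k) i0 0) by rewrite mxE ncR ger0_norm.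
  have -> : cx (u k) = W *m y k by rewrite /y mulmxA hW mul1mx.
  apply: le_trans (nc_mul_le _ _ _) _.
  rewrite -mulrA [N1 _ * _]mulrC; apply: ler_wpM2l; last exact: hy.
  by apply: sumr_ge0 => j _; apply: sumr_ge0 => i _; exact: nc_ge0.
set K := Kmx W * N1 (y 0%N) in hb.
pose p := l / q.
have p1 : 1 <= p by rewrite /p ler_pdivlMr // mul1r ltW.
have hp : forall k, p ^+ k * x i0 0 <= K.
  move=> k; have qk : 0 < q ^+ k by exact: exprn_gt0.
  rewrite -(ler_pM2r qk) mulrAC -exprMn /p divfK //; last by apply: lt0r_neq0.
have p1' : 0 < p - 1.
  rewrite subr_gt0 /p ltr_pdivlMr // mul1r //.
pose k := Num.Def.archi_bound (K / (x i0 0 * (p - 1))).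
have xp : 0 < x i0 0 * (p - 1) by exact: mulr_gt0.
have K0 : 0 <= K.
  apply: le_trans (hp 0%N); rewrite expr0 mul1r; exact: x0.
have hk : K / (x i0 0 * (p - 1)) < k%:R.
  by apply: archi_boundP; apply: divr_ge0 => //; exact: ltW.
have h1 := @bernoulli p k p1.
have h2 := hp k.
rewrite ltr_pdivrMr // in hk.
have h3 := ler_wpM2l (ltW xi0) h1.
have e : k%:R * (x i0 0 * (p - 1)) = x i0 0 * (k%:R * (p - 1)) by rewrite mulrCA.
have : K < K.
  apply: (lt_le_trans hk); rewrite e; apply: (le_trans _ h2); rewrite [p ^+ k * _]mulrC.
  apply: (le_trans _ h3); apply: ler_wpM2l; [exact: ltW | by rewrite lerDr ler01].
by rewrite ltxx.
Qed.
End Helpers.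

Theorem theorem3p3 (R : realType) (n : nat) (A : 'M[R]_n) (x : 'cV[R]_n) :
  nonneg_mx A -> perron_eigenvector A x ->
  ((forall i j k : 'I_n, x k 0 < x j 0 -> A i k <= A i j) ->
     in_Omega A A /\ forall B, in_Omega A B -> spectral_radius B <= spectral_radius A)
  /\
  ((forall i j k : 'I_n, x k 0 < x j 0 -> A i j <= A i k) ->
     in_Omega A A /\ forall B, in_Omega A B -> spectral_radius A <= spectral_radius B).
Proof.
move=> A0 [xn0 [x0 Ax]].
set rho := spectral_radius A.
have Ax' i : \sum_j A i j * x j 0 = rho * x i 0.
  by have := congr1 (fun M : 'cV[R]_n => M i 0) Ax; rewrite !mxE.
have AA : in_Omega A A by split => // i; exists 1%g => j; rewrite perm1.
have Bx (B : 'M[R]_n) (hB : forall i : 'I_n, exists phi : 'S_n, forall j, B i j = A i (phi j)) i :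
  exists s : 'S_n, (B *m x) i 0 = \sum_j A i (s j) * x j 0.
  have [s hs] := hB i; exists s; rewrite mxE; apply: eq_bigr => j _; by rewrite hs.
have [j0 xj0] : exists j0, 0 < x j0 0.
  apply/existsP; apply: contraNT xn0; rewrite negb_exists => /forallP h.
  apply/eqP/colP => i; rewrite mxE; apply: le_anti; rewrite x0 andbT.
  by move: (h i); rewrite -leNgt.
split => hord; split => // B [B0 hB].
  apply: (@rho_upper R n B x rho) => //.
  - exact: rho_ge0.
  - move=> i; have [s ->] := Bx B hB i; rewrite -Ax'.
    exact: (@rearr R n (fun j => A i j) (fun j => x j 0) s (fun j k hk => hord i j k hk)).
  - move=> i j xi; have [s hs] := hB i; rewrite hs.
    have hz k : A i k * x k 0 = 0.
      have : \sum_j A i j * x j 0 == 0 by rewrite Ax' xi mulr0.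
      rewrite psumr_eq0 => [/allP h|l _]; last by apply: mulr_ge0.
      by apply/eqP; apply: h; exact: mem_index_enum.
    have Aj0 : A i j0 = 0.
      by move/eqP: (hz j0); rewrite mulf_eq0 (gt_eqF xj0) orbF => /eqP.
    have [xk|xk] := ltP (x (s j) 0) (x j0 0).
      by apply: le_anti; rewrite A0 andbT -Aj0; apply: hord.
    have xkp : 0 < x (s j) 0 by apply: lt_le_trans xk.
    by move/eqP: (hz (s j)); rewrite mulf_eq0 (gt_eqF xkp) orbF => /eqP.
apply: (@rho_lower R n B x rho) => // i.
have [s ->] := Bx B hB i; rewrite -Ax'.
have h := @rearr R n (fun j => - A i j) (fun j => x j 0) s
  (fun j k hk => (introT idP (etrans (lerN2 _ _) (hord i j k hk)))).
have e1 (F : 'I_n -> R) : \sum_j (- F j) * x j 0 = - \sum_j F j * x j 0.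
  by rewrite -sumrN; apply: eq_bigr => j _; rewrite mulNr.
move: h; rewrite /= (e1 (fun j => A i (s j))) (e1 (fun j => A i j)) lerN2.
done.
Qed.
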